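(* Fix integers $k \ge 2$ and $1 \le t \le k$. Let $X$ be a set of $n$ elements carrying a fixed but unknown total order, and suppose we have a $(k,t)$ scale, which on input any $k$-element subset of $X$ returns the $t$-th smallest element of that subset. Let $S$ be the set of the $t-1$ smallest elements of $X$ and $L$ the set of the $k-t$ largest elements of $X$. Then there is an adaptive (on-line) procedure, using $O(n \log n)$ queries (for fixed $k$ and $t$, as $n \to \infty$), which identifies the set $S \cup L$ and determines the relative order of all elements of $X \setminus (S \cup L)$; if the scale is symmetric, i.e. $t = (k+1)/2$, the order is determined up to reversal.
   Context: A query consists of submitting a $k$-element subset of $X$ to the scale and receiving its output. In the on-line setting each query may be chosen depending on the results of previous queries. The ordering of the elements of $S$ and of $L$ can never be determined, since these elements are never returned by any query. *)

(* Defs.v *)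
From mathcomp Require Import all_boot all_order all_fingroup.
Set Implicit Arguments. Unset Strict Implicit. Unset Printing Implicit Defensive.

(* The ground set X is 'I_n.  The unknown total order is encoded by a
   permutation p : {perm 'I_n}; p x is the (0-based) rank of x, so
   x is smaller than y iff p x < p y. *)

Definition scale (t n : nat) (p : {perm 'I_n}) (A : {set 'I_n}) : option 'I_n :=
  [pick x in A | #|[set y in A | p y < p x]| == t.-1].

(* Adaptive (on-line) query procedures = decision trees.  A leaf outputs
   a candidate for S ∪ L together with a sequence listing the remaining
   elements in (claimed) increasing order. *)
Inductive qtree (n : nat) : Type :=
| QLeaf of {set 'I_n} * seq 'I_n
| QAsk of {set 'I_n} & ('I_n -> qtree n).

Fixpoint run (k t n : nat) (p : {perm 'I_n}) (T : qtree n)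
  : option (nat * ({set 'I_n} * seq 'I_n)) :=
  match T with
  | QLeaf o => Some (0, o)
  | QAsk A f =>
      if #|A| == k then
        match scale t p A with
        | Some x => omap (fun r => (r.1.+1, r.2)) (run k t p (f x))
        | None => None
        end
      else None
  end.

Definition smallS (t n : nat) (p : {perm 'I_n}) : {set 'I_n} :=
  [set x | p x < t.-1].
Definition largeL (k t n : nat) (p : {perm 'I_n}) : {set 'I_n} :=
  [set x | n - (k - t) <= p x].

Definition mid_sorted (k t n : nat) (p : {perm 'I_n}) : seq 'I_n :=
  sort (fun x y => p x <= p y) (enum (~: (smallS t p :|: largeL k t p))).

(* Main.v *)
Require Import Defs.
From mathcomp Require Import all_boot all_order all_fingroup zify.
Set Implicit Arguments. Unset Strict Implicit. Unset Printing Implicit Defensive.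

Inductive prog (n : nat) (A : Type) : Type :=
| Ret of A
| Ask of {set 'I_n} & ('I_n -> prog n A).
Arguments Ret {n A}. Arguments Ask {n A}.

Fixpoint bindp n A B (P : prog n A) (f : A -> prog n B) : prog n B :=
  match P with Ret a => f a | Ask Q g => Ask Q (fun x => bindp (g x) f) end.

Fixpoint eval k t n p A (P : prog n A) : option (nat * A) :=
  match P with
  | Ret a => Some (0, a)
  | Ask Q g => if #|Q| == k then
      match scale t p Q with
      | Some x => omap (fun r => (r.1.+1, r.2)) (eval k t p (g x))
      | None => None end
    else None end.

Fixpoint toq n (P : prog n ({set 'I_n} * seq 'I_n)) : qtree n :=
  match P with Ret o => QLeaf o | Ask Q g => QAsk Q (fun x => toq (g x)) end.

Fixpoint foldp n S T (f : S -> T -> prog n S) (l : seq T) (s : S) : prog n S :=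
  match l with [::] => Ret s | x :: l' => bindp (f s x) (foldp f l') end.

Section Sem.
Variables (k t n : nat) (p : {perm 'I_n}).

Lemma run_toq P : run k t p (toq P) = eval k t p P.
Proof.
elim: P => //= Q g IH; case: (#|Q| == k) => //; case: (scale t p Q) => // x.
by rewrite IH.
Qed.

Definition spec A (P : prog n A) (c : nat) (R : A -> Prop) :=
  exists c' a, eval k t p P = Some (c', a) /\ c' <= c /\ R a.

Lemma spec_ret A (a : A) c (R : A -> Prop) : R a -> spec (Ret a) c R.
Proof. by move=> Ra; exists 0, a. Qed.

Lemma spec_weaken A (P : prog n A) c1 c2 (R1 R2 : A -> Prop) :
  spec P c1 R1 -> c1 <= c2 -> (forall a, R1 a -> R2 a) -> spec P c2 R2.
Proof.
move=> [c' [a [E [le Ra]]]] le12 imp; exists c', a; split=> //; split; last exact: imp.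
exact: leq_trans le12.
Qed.

Lemma spec_bind A B (P : prog n A) (f : A -> prog n B) c1 c2 R1 R2 :
  spec P c1 R1 -> (forall a, R1 a -> spec (f a) c2 R2) -> spec (bindp P f) (c1 + c2) R2.
Proof.
elim: P c1 => [a|Q g IH] c1 /=.
  move=> [c' [a' [[<- <-] [_ Ra]]]] H.
  by apply: spec_weaken (H _ Ra) _ _ => //; rewrite leq_addl.
move=> [c' [a' []]] /=.
case: eqP => // HQ; case Es: (scale t p Q) => [x|] //.
case Eg: (eval k t p (g x)) => [[c'' a'']|] //= [<- <-] [lec Ra] H.
have [c3 [b [E3 [le3 Rb]]]] : spec (bindp (g x) f) (c'' + c2) R2.
  apply: IH => //; exists c'', a''; split=> //.
exists c3.+1, b; rewrite /= HQ eqxx Es E3; split=> //; split=> //.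
apply: leq_trans (_ : (c'' + c2).+1 <= c1 + c2) => //.
by rewrite -addSn leq_add2r.
Qed.

Lemma spec_ask A (Q : {set 'I_n}) (g : 'I_n -> prog n A) c R :
  #|Q| = k -> (exists x, scale t p Q = Some x) ->
  (forall x, scale t p Q = Some x -> spec (g x) c R) -> spec (Ask Q g) c.+1 R.
Proof.
move=> HQ [x Ex] H; have [c' [a [E [le Ra]]]] := H x Ex.
by exists c'.+1, a; rewrite /= HQ eqxx Ex E.
Qed.

Lemma spec_fold S T (f : S -> T -> prog n S) (I : seq T -> S -> Prop) c :
  (forall x l s, I (x :: l) s -> spec (f s x) c (I l)) ->
  forall l s, I l s -> spec (foldp f l s) (c * size l) (I [::]).
Proof.
move=> H; elim=> [|x l IH] s Is /=; first by apply: spec_ret.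
rewrite mulnS; apply: spec_bind (H _ _ _ Is) _ => s' Is'; exact: IH.
Qed.

End Sem.

Lemma count_lt_iota m n : count (fun i => i < m) (iota 0 n) = minn m n.
Proof.
elim: n => [|n IH]; first by rewrite minn0.
by rewrite -addn1 iotaD count_cat IH /= add0n; lia.
Qed.

Lemma card_lt n m : #|[set i : 'I_n | i < m]| = minn m n.
Proof.
rewrite cardsE cardE /enum_mem size_filter -enumT -(count_map val (fun i => i < m)).
by rewrite val_enum_ord count_lt_iota.
Qed.

Lemma card_ge n m : #|[set i : 'I_n | m <= i]| = n - m.
Proof.
have := cardsC [set i : 'I_n | i < m]; rewrite card_ord card_lt.
have -> : ~: [set i : 'I_n | i < m] = [set i : 'I_n | m <= i].
  by apply/setP=> i; rewrite !inE -leqNgt.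
lia.
Qed.

Lemma card_permP n (p : {perm 'I_n}) (P : pred nat) :
  #|[set x | P (p x)]| = #|[set i : 'I_n | P i]|.
Proof.
rewrite -[RHS](card_preimset _ (@perm_inj _ p)); apply: eq_card => x.
by rewrite !inE.
Qed.

Section Scale.
Variables (k t n : nat) (p : {perm 'I_n}).
Hypotheses (ht1 : 1 <= t) (htk : t <= k) (hkn : k <= n).

Definition B (Q : {set 'I_n}) x := [set y in Q | p y < p x].

Lemma B_sub (Q : {set 'I_n}) x y : p x < p y -> x \in Q -> (#|B Q x| < #|B Q y|).
Proof.
move=> lt xQ.
have sub : x |: B Q x \subset B Q y.
  apply/subsetP=> z; rewrite !inE => /orP[/eqP->|/andP[zQ lz]]; first by rewrite xQ lt.
  by rewrite zQ (ltn_trans lz lt).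
have := subset_leq_card sub; rewrite cardsU1 !inE ltnn andbF /=; lia.
Qed.

Lemma B_inj (Q : {set 'I_n}) x y : x \in Q -> y \in Q -> #|B Q x| = #|B Q y| -> x = y.
Proof.
move=> xQ yQ e; case: (ltngtP (p x) (p y)) => [lt|lt|].
- by have := B_sub lt xQ; rewrite e ltnn.
- by have := B_sub lt yQ; rewrite e ltnn.
- by move=> /val_inj/perm_inj.
Qed.

Lemma scale_some (Q : {set 'I_n}) x : scale t p Q = Some x -> x \in Q /\ #|B Q x| = t.-1.
Proof.
rewrite /scale; case: pickP => // y /andP[yQ /eqP c] [<-]; split=> //.
Qed.

Lemma scale_eq (Q : {set 'I_n}) x : x \in Q -> #|B Q x| = t.-1 -> scale t p Q = Some x.
Proof.
move=> xQ c; rewrite /scale; case: pickP => [y /andP[yQ /eqP c']|H].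
  congr Some; apply: (B_inj yQ xQ); rewrite c -c'.
  by congr #|_|; apply/setP=> z; rewrite !inE.
have := H x; rewrite xQ /= -c.
have -> : [set y in Q | p y < p x] = B Q x by apply/setP=> z; rewrite !inE.
by rewrite eqxx.
Qed.

Lemma B_lt (Q : {set 'I_n}) x : x \in Q -> #|B Q x| < #|Q|.
Proof.
move=> xQ; apply: proper_card; apply/properP; split.
  by apply/subsetP=> z; rewrite inE => /andP[].
by exists x => //; rewrite inE ltnn andbF.
Qed.

Lemma B_ltn (Q : {set 'I_n}) x : #|Q| = k -> x \in Q -> #|B Q x| < n.+1.
Proof.
move=> cQ xQ; apply: leq_trans (B_lt xQ) _; rewrite cQ; exact: leq_trans hkn _.
Qed.

Lemma scale_ex (Q : {set 'I_n}) : #|Q| = k -> exists x, scale t p Q = Some x.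
Proof.
move=> cQ.
pose f := fun x : 'I_n => (inord #|B Q x| : 'I_n.+1).
have finj : {in Q &, injective f}.
  move=> x y xQ yQ /(congr1 val); rewrite /f /= !inordK; last 2 first.
  - exact: B_ltn.
  - exact: B_ltn.
  exact: B_inj.
have sub : f @: Q \subset [set i : 'I_n.+1 | i < k].
  apply/subsetP=> i /imsetP[x xQ ->]; rewrite inE /f /= inordK.
    by rewrite -cQ B_lt.
  exact: B_ltn.
have eqs : f @: Q = [set i : 'I_n.+1 | i < k].
  apply/eqP; rewrite eqEcard sub card_lt (card_in_imset finj) cQ; lia.
have : (inord t.-1 : 'I_n.+1) \in f @: Q by rewrite eqs inE inordK; lia.
move=> /imsetP[x xQ /(congr1 val)]; rewrite /f /= !inordK; last 2 first.
- exact: B_ltn.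
- lia.
by move=> c; exists x; apply: scale_eq.
Qed.

Definition S := smallS t p.
Definition L := largeL k t p.
Definition E := S :|: L.

Lemma inS x : (x \in S) = (p x < t.-1). Proof. by rewrite inE. Qed.
Lemma inL x : (x \in L) = (n - (k - t) <= p x). Proof. by rewrite inE. Qed.
Lemma inE' x : (x \in E) = (p x < t.-1) || (n - (k - t) <= p x).
Proof. by rewrite !inE. Qed.

Lemma cardS : #|S| = t.-1.
Proof. by rewrite /S /smallS (card_permP p (fun i => i < t.-1)) card_lt; lia. Qed.

Lemma cardL : #|L| = k - t.
Proof. rewrite /L /largeL (card_permP p (fun i => n - (k - t) <= i)) card_ge; lia. Qed.

Lemma card_E : #|E| = k.-1.
Proof.
have := cardsU S L; rewrite cardS cardL.
have -> : S :&: L = set0.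
  apply/setP=> x; rewrite !inE; lia.
rewrite cards0 /E; lia.
Qed.

Lemma scale_mid (Q : {set 'I_n}) x : #|Q| = k -> scale t p Q = Some x -> x \notin E.
Proof.
move=> cQ /scale_some [xQ c]; rewrite inE'.
have h1 : #|B Q x| <= p x.
  apply: (@leq_trans #|[set y | p y < p x]|).
    by apply: subset_leq_card; apply/subsetP=> z; rewrite !inE => /andP[].
  by rewrite (card_permP p (fun i => i < p x)) card_lt geq_minl.
pose U := [set y in Q | p x < p y].
have hU : #|U| <= n - (p x).+1.
  apply: (@leq_trans #|[set y | (p x).+1 <= p y]|).
    by apply: subset_leq_card; apply/subsetP=> z; rewrite !inE => /andP[].
  by rewrite (card_permP p (fun i => (p x).+1 <= i)) card_ge.
have hQ := cardsID [set y | p y < p x] Q.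
have e1 : Q :&: [set y | p y < p x] = B Q x by apply/setP=> z; rewrite !inE andbC.
have e2 : Q :\: [set y | p y < p x] = x |: U.
  apply/setP=> z; rewrite !inE -(inj_eq (@perm_inj _ p)).
  case: (z =P x) => [->|]; first by rewrite xQ ltnn eqxx.
  move=> /eqP; rewrite -(inj_eq (@perm_inj _ p)) => nz.
  have nz' : nat_of_ord (p z) != p x by rewrite val_eqE.
  by rewrite (negbTE nz) /=; case: (z \in Q) => //=; lia.
rewrite e1 e2 cardsU1 inE ltnn andbF /= in hQ.
move: hQ; rewrite c cQ => hQ.
rewrite c in h1; move: (ltn_ord (p x)) h1 hU hQ; move: #|U| (nat_of_ord (p x)) => u px. lia.
Qed.
End Scale.

Section Query.
Variables (k t n : nat) (p : {perm 'I_n}).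
Hypotheses (ht1 : 1 <= t) (htk : t <= k) (hkn : k <= n).
Local Notation S := (S t p).
Local Notation L := (L k t p).
Local Notation E := (E k t p).

Lemma eq_p (a b : 'I_n) : (a == b) = (nat_of_ord (p a) == p b).
Proof. by rewrite val_eqE (inj_eq (@perm_inj _ p)). Qed.

Definition qry e x y := (E :\ e) :|: [set x; y].

Lemma qry_card e x y : e \in E -> x \notin E -> y \notin E -> x != y -> #|qry e x y| = k.
Proof.
move=> eE xE yE xy.
have := cardsU (E :\ e) [set x; y].
have -> : (E :\ e) :&: [set x; y] = set0.
  move: xE yE; rewrite !inE' // => xE yE.
  apply/setP=> z; rewrite !inE !eq_p.
  move: (nat_of_ord (p z)) (nat_of_ord (p x)) (nat_of_ord (p y)) xE yE => a b c.
  lia.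
have := cardsD1 e E; rewrite eE card_E // cards2 xy cards0 /qry.
lia.
Qed.

Lemma qry_core e x y : e \in E -> x \notin E -> y \notin E -> p x < p y ->
  scale t p (qry e x y) = Some (if e \in L then x else y).
Proof.
move=> eE xE yE lt.
move: eE xE yE; rewrite !inE' // => eE xE yE.
case eL: (e \in L); move: eL; rewrite inL => eL.
- apply: (scale_eq ht1 htk hkn); first by rewrite /qry !inE eqxx /= orbT.
  rewrite -(cardS p ht1 htk hkn); congr #|pred_of_set _|; apply/setP=> z; rewrite !inE !eq_p.
  have := ltn_ord (p z); have := ltn_ord (p e).
  move: (nat_of_ord (p z)) (nat_of_ord (p e)) eE xE yE lt eL => a b.
  lia.
- apply: (scale_eq ht1 htk hkn); first by rewrite /qry !inE eqxx /= !orbT.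
  have eS : e \in S.
    rewrite inS; move: eE eL; move: (nat_of_ord (p e)) => b; lia.
  have -> : B p (qry e x y) y = x |: (S :\ e).
    apply/setP => z; rewrite !inE !eq_p.
    have := ltn_ord (p z); have := ltn_ord (p e).
    move: (nat_of_ord (p z)) (nat_of_ord (p e)) eE xE yE lt eL => a b.
    lia.
  rewrite cardsU1 !inE eq_p.
  have := cardsD1 e S; rewrite eS (cardS p ht1 htk hkn).
  move: xE eE; move: (nat_of_ord (p x)) (nat_of_ord (p e)) => a b.
  move: (#|S :\ e|) => c.
  lia.
Qed.

Lemma qry_ans e x y : e \in E -> x \notin E -> y \notin E -> x != y ->
  scale t p (qry e x y) = Some (if (e \in L) == (p x < p y) then x else y).
Proof.
move=> eE xE yE xy; case: (ltngtP (p x) (p y)) => [lt|lt|eq].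
- by rewrite (qry_core eE xE yE lt); case: (e \in L).
- have -> : qry e x y = qry e y x by rewrite /qry [[set x; y]]setUC.
  by rewrite (qry_core eE yE xE lt); case: (e \in L).
- by move: xy; rewrite eq_p eq eqxx.
Qed.
End Query.

Fixpoint mmerge n (cmp : 'I_n -> 'I_n -> prog n bool) (f : nat) (l1 l2 : seq 'I_n)
  : prog n (seq 'I_n) :=
  match f with
  | 0 => Ret (l1 ++ l2)
  | f'.+1 =>
    match l1, l2 with
    | [::], _ => Ret l2
    | _, [::] => Ret l1
    | x :: l1', y :: l2' =>
      bindp (cmp x y) (fun b => if b
        then bindp (mmerge cmp f' l1' l2) (fun r => Ret (x :: r))
        else bindp (mmerge cmp f' l1 l2') (fun r => Ret (y :: r)))
    end
  end.

Fixpoint msort n (cmp : 'I_n -> 'I_n -> prog n bool) (d : nat) (l : seq 'I_n)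
  : prog n (seq 'I_n) :=
  match d with
  | 0 => Ret l
  | d'.+1 =>
    if size l <= 1 then Ret l else
    bindp (msort cmp d' (take (size l)./2 l)) (fun s1 =>
    bindp (msort cmp d' (drop (size l)./2 l)) (fun s2 =>
    mmerge cmp (size l) s1 s2))
  end.

Lemma merge_cons2 (T : Type) (le : rel T) x y s1 s2 :
  merge le (x :: s1) (y :: s2) =
  if le x y then x :: merge le s1 (y :: s2) else y :: merge le (x :: s1) s2.
Proof. by []. Qed.

Section Sort.
Variables (k t n : nat) (p : {perm 'I_n}) (le : rel 'I_n) (ok : pred 'I_n)
  (cmp : 'I_n -> 'I_n -> prog n bool).
Hypothesis cmpP : forall x y, ok x -> ok y -> x != y ->
  spec k t p (cmp x y) 1 (fun b => b = le x y).
Hypothesis le_total : total le.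

Lemma spec_map A B (P : prog n A) c (v : A) (g : A -> B) :
  spec k t p P c (fun a => a = v) ->
  spec k t p (bindp P (fun r => Ret (g r))) c (fun b => b = g v).
Proof.
move=> H; rewrite -[c]addn0; apply: spec_bind H _ => a ->; exact: spec_ret.
Qed.

Lemma mmerge_spec f : forall l1 l2, size l1 + size l2 <= f ->
  uniq (l1 ++ l2) -> all ok (l1 ++ l2) ->
  spec k t p (mmerge cmp f l1 l2) (size l1 + size l2) (fun r => r = merge le l1 l2).
Proof.
elim: f => [|f IH] [|x l1] [|y l2] //= hs hu ha; try by apply: spec_ret; rewrite ?cats0.
have xy : x != y.
  by move: hu => /andP[]; rewrite mem_cat inE !negb_or => /and3P[_ -> _].
move: ha => /andP[okx]; rewrite all_cat /= => /and3P[okl1 oky okl2].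
eapply (spec_weaken (c1 := 1 + (size l1 + size (y :: l2)))
  (R1 := fun r => r = if le x y then x :: merge le l1 (y :: l2)
                      else y :: merge le (x :: l1) l2)); last first.
- by move=> r ->.
- rewrite /=; lia.
apply: spec_bind (cmpP okx oky xy) _ => b ->.
case: (le x y).
- apply: spec_map; apply: IH => //=; first lia.
    by rewrite all_cat /= okl1 oky okl2.
- apply: spec_weaken (spec_map _ (IH (x :: l1) l2 _ _ _)) _ _ => //=.
  + lia.
  + have hu' : uniq ((x :: l1) ++ y :: l2) by [].
    have : uniq ((x :: l1) ++ l2).
      apply: subseq_uniq hu'; apply: cat_subseq => //; exact: subseq_cons.
    by [].
  + by rewrite okx all_cat okl1 okl2.
  + lia.
Qed.

Lemma sorted_small (l : seq 'I_n) : size l <= 1 -> sorted le l.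
Proof. by case: l => [|x [|y l]]. Qed.

Lemma msort_spec d : forall l, uniq l -> all ok l ->
  spec k t p (msort cmp d l) (d * size l)
    (fun s => perm_eq s l /\ (size l <= 2 ^ d -> sorted le s)).
Proof.
elim: d => [|d IH] l hu ha /=.
  by apply: spec_ret; split=> // h; apply: sorted_small.
case: ifP => hl.
  by apply: spec_ret; split=> // _; apply: sorted_small.
set h := (size l)./2.
have hul : uniq (take h l ++ drop h l) by rewrite cat_take_drop.
have hal : all ok (take h l ++ drop h l) by rewrite cat_take_drop.
move: hul hal; rewrite cat_uniq all_cat => /and3P[u1 _ u2] /andP[a1 a2].
have st : size (take h l) + size (drop h l) = size l.
  by rewrite -size_cat cat_take_drop.
have -> : d.+1 * size l = d * size (take h l) + (d * size (drop h l) + size l).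
  rewrite mulSn -st; lia.
apply: spec_bind (IH _ u1 a1) _ => s1 [p1 so1].
apply: spec_bind (IH _ u2 a2) _ => s2 [p2 so2].
have p12 : perm_eq (s1 ++ s2) l.
  by rewrite -[X in perm_eq _ X](cat_take_drop h l); apply: perm_cat.
apply: spec_weaken (mmerge_spec (f := size l) _ _ _) _ _.
- by rewrite -size_cat (perm_size p12).
- by rewrite (perm_uniq p12).
- by rewrite (perm_all _ p12).
- by rewrite -size_cat (perm_size p12).
move=> r ->; split.
  by rewrite (perm_trans _ p12) // perm_merge.
move=> hsz; rewrite expnS in hsz; move: (2 ^ d) hsz so1 so2 => N hsz so1 so2.
apply: merge_sorted => //.
- apply: so1; rewrite size_take /h; move: (size l) hsz => m hm; case: ifP => hh; lia.
- apply: so2; rewrite size_drop /h; move: (size l) hsz => m hm; lia.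
Qed.
End Sort.

Definition step1 n (C : {set 'I_n}) (z : 'I_n) : prog n {set 'I_n} :=
  Ask (C :|: [set z]) (fun r => Ret ((C :|: [set z]) :\ r)).
Definition zs n m : seq 'I_n := [seq i : 'I_n <- enum 'I_n | m <= i].
Definition C0 n m : {set 'I_n} := [set i : 'I_n | i < m].
Definition qset n (C : {set 'I_n}) e x y := (C :\ e) :|: [set x; y].
Definition step2 n (C : {set 'I_n}) x0 y0 (A : {set 'I_n}) (e : 'I_n) :=
  Ask (qset C e x0 y0) (fun r => Ret (if r == x0 then e |: A else A)).
Definition cmpq n (C : {set 'I_n}) e0 (x y : 'I_n) :=
  Ask (qset C e0 x y) (fun r => Ret (r == x)).

Section Phases.
Variables (k t n : nat) (p : {perm 'I_n}).
Hypotheses (ht1 : 1 <= t) (htk : t <= k) (hkn : k <= n) (hk : 2 <= k).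
Local Notation S := (S t p).
Local Notation L := (L k t p).
Local Notation E := (E k t p).

Definition I1 (s : seq 'I_n) (C : {set 'I_n}) :=
  [/\ uniq s, (forall z, z \in s -> z \notin C), #|C| = k.-1 &
      (forall z, z \in E -> z \notin s -> z \in C)].

Lemma phase1 : spec k t p (foldp (@step1 n) (zs n k.-1) (C0 n k.-1)) n (fun C => C = E).
Proof.
have H := @spec_fold k t n p _ _ (@step1 n) I1 1.
apply: spec_weaken (H _ _ _ _) _ _.
- move=> x s C [/= /andP[xs us] hsC cC hE].
  have xC : x \notin C by apply: hsC; rewrite inE eqxx.
  have cQ : #|C :|: [set x]| = k by rewrite setUC cardsU1 xC cC; lia.
  apply: spec_ask => //; first exact: (scale_ex p ht1 htk hkn cQ).
  move=> r hr; apply: spec_ret.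
  have [rQ _] := scale_some hr.
  have rE := scale_mid ht1 htk hkn cQ hr.
  split=> //.
  + move=> z zs; rewrite !inE negb_and negb_or.
    have -> : z != x by apply: contraNneq xs => <-.
    by rewrite (negbTE (hsC z _)) ?orbT // inE zs orbT.
  + have := cardsD1 r (C :|: [set x]); rewrite rQ cQ /=; move: #|_ :\ r| => c; lia.
  + move=> z zE zs; rewrite !inE.
    have -> : z != r by apply: contraNneq rE => <-.
    case: (z =P x) => [_|/eqP zx]; first by rewrite orbT.
    by rewrite hE // inE negb_or zx.
- split.
  + by rewrite filter_uniq // enum_uniq.
  + by move=> z; rewrite mem_filter inE; lia.
  + by rewrite card_lt; lia.
  + by move=> z _; rewrite mem_filter mem_enum andbT inE; move: (nat_of_ord z) => a; lia.
- rewrite mul1n /zs size_filter; have := count_size (fun i : 'I_n => k.-1 <= i) (enum 'I_n).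
  by rewrite size_enum_ord.
- move=> C [_ _ cC hE]; apply/eqP; rewrite eq_sym eqEcard cC (card_E p ht1 htk hkn) leqnn andbT.
  by apply/subsetP=> z zE; apply: hE.
Qed.


Section Phase2.
Variables x0 y0 : 'I_n.
Hypotheses (x0E : x0 \notin E) (y0E : y0 \notin E) (xy0 : x0 != y0).
Definition good e := (e \in L) == (p x0 < p y0).
Definition I2 (s : seq 'I_n) (A : {set 'I_n}) :=
  [/\ uniq s, {subset s <= E} & A = [set e in E | (e \notin s) && good e]].

Lemma phase2 : spec k t p (foldp (step2 E x0 y0) (enum E) set0) k
  (fun A => A = [set e in E | good e]).
Proof.
have H := @spec_fold k t n p _ _ (step2 E x0 y0) I2 1.
apply: spec_weaken (H _ _ _ _) _ _.
- move=> e s A [/= /andP[es us] sE ->].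
  have eE : e \in E by apply: sE; rewrite inE eqxx.
  have cQ : #|qset E e x0 y0| = k by exact: (qry_card ht1 htk hkn eE x0E y0E xy0).
  have hq := qry_ans ht1 htk hkn eE x0E y0E xy0.
  apply: spec_ask => //; first by eexists; exact: hq.
  move=> r; rewrite /qset hq => -[<-]; apply: spec_ret; split=> //.
    by move=> z zs; apply: sE; rewrite inE zs orbT.
  apply/setP=> z; rewrite -/(good e).
  have -> : ((if good e then x0 else y0) == x0) = good e.
    by case: (good e); rewrite ?eqxx // eq_sym (negbTE xy0).
  case: (z =P e) => [->|/eqP ze].
    by case ge: (good e); rewrite ?in_setU1 !in_set !in_cons ?eqxx -?inE' ?eE ?es ?ge.
  by case: (good e); rewrite ?in_setU1 !in_set !in_cons ?(negbTE ze).
- split; [exact: enum_uniq | by move=> z; rewrite mem_enum |].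
  by apply/setP=> z; rewrite in_set0 in_set mem_enum; case: (z \in E).
- by rewrite mul1n -cardE (card_E p ht1 htk hkn); lia.
- by move=> A [_ _ ->]; apply/setP=> z; rewrite !inE.
Qed.
End Phase2.

Definition rel_of (b : bool) : rel 'I_n :=
  fun x y => if b then p x <= p y else p y <= p x.

Lemma rel_total b : total (rel_of b).
Proof. by move=> x y; rewrite /rel_of; case: b; apply: leq_total. Qed.

Lemma rel_trans b : transitive (rel_of b).
Proof.
by move=> x y z; rewrite /rel_of; case: b => h1 h2; [apply: leq_trans h1 h2|apply: leq_trans h2 h1].
Qed.

Lemma rel_anti b : antisymmetric (rel_of b).
Proof.
move=> x y; rewrite /rel_of => h; apply: (@perm_inj _ p); apply: val_inj; apply/eqP.
by case: b h => /andP[h1 h2]; rewrite eqn_leq h1 h2.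
Qed.

Lemma cmp_spec e0 : e0 \in E -> forall x y, x \notin E -> y \notin E -> x != y ->
  spec k t p (cmpq E e0 x y) 1 (fun b => b = rel_of (e0 \in L) x y).
Proof.
move=> eE x y xE yE xy.
have hq := qry_ans ht1 htk hkn eE xE yE xy.
apply: spec_ask; first exact: (qry_card ht1 htk hkn eE xE yE xy).
  by eexists; exact: hq.
move=> r; rewrite /qset hq => -[<-]; apply: spec_ret.
have nxy : nat_of_ord (p x) != p y by rewrite -eq_p.
rewrite /rel_of; case: (e0 \in L); case: ifP => /=; rewrite ?eqxx ?(negbTE xy) ?(eq_sym y) ?(negbTE xy);
  move: (nat_of_ord (p x)) (nat_of_ord (p y)) nxy => a b; lia.
Qed.

End Phases.

Definition algo k t n (i0 : 'I_n) : prog n ({set 'I_n} * seq 'I_n) :=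
  bindp (foldp (@step1 n) (zs n k.-1) (C0 n k.-1)) (fun C =>
  bindp (foldp (step2 C (nth i0 (enum (~: C)) 0) (nth i0 (enum (~: C)) 1)) (enum C) set0)
    (fun Ax =>
  bindp (msort (cmpq C (odflt (odflt i0 [pick e in C])
                  (if #|Ax| == k - t then [pick e in Ax] else [pick e in C :\: Ax])))
               (trunc_log 2 n).+1 (enum (~: C))) (fun s =>
  Ret (C, if k - t != 0 then s else rev s)))).

Section Algo.
Variables (k t n : nat) (p : {perm 'I_n}) (i0 : 'I_n).
Hypotheses (ht1 : 1 <= t) (htk : t <= k) (hkn : k < n) (hk : 2 <= k).
Local Notation S := (S t p).
Local Notation L := (L k t p).
Local Notation E := (E k t p).

Lemma algo_spec : spec k t p (algo k t i0) (n + (k + ((trunc_log 2 n).+1 * n + 0)))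
  (fun o => o.1 = E /\ (o.2 = mid_sorted k t p \/
              (k.+1 = t.*2 /\ o.2 = rev (mid_sorted k t p)))).
Proof.
have hkn' : k <= n by apply: ltnW.
rewrite /algo; apply: spec_bind (phase1 p ht1 htk hkn' hk) _ => C ->.
set mid := enum (~: E).
have umid : uniq mid by apply: enum_uniq.
have smid : size mid = n - k.-1.
  rewrite /mid -cardE; have := cardsC E; rewrite card_ord (card_E p ht1 htk hkn'); move: #|~: E| => c; lia.
have mE : forall z, z \in mid -> z \notin E by move=> z; rewrite mem_enum inE.
set x0 := nth i0 mid 0; set y0 := nth i0 mid 1.
have x0E : x0 \notin E by apply: mE; apply: mem_nth; rewrite smid; lia.
have y0E : y0 \notin E by apply: mE; apply: mem_nth; rewrite smid; lia.
have xy0 : x0 != y0 by rewrite /x0 /y0 nth_uniq // smid; lia.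
apply: spec_bind (phase2 ht1 htk hkn' hk x0E y0E xy0) _ => Ax ->.
have hAx : [set e in E | good k t p x0 y0 e] = if p x0 < p y0 then L else S.
  apply/setP=> z; rewrite /good; case: (p x0 < p y0); rewrite !inE;
  move: (nat_of_ord (p z)) => a; lia.
have ES : E :\: S = L by apply/setP=> z; rewrite !inE; move: (nat_of_ord (p z)) => a; lia.
have cS := cardS p ht1 htk hkn'.
have cL := cardL p ht1 htk hkn'.
have cE := card_E p ht1 htk hkn'.
have pE : forall A : {set 'I_n}, A \subset E ->
    odflt (odflt i0 [pick e in E]) [pick e in A] \in E.
  move=> A sA; case: (pickP (fun x => x \in A)) => [e eA|_] /=; first exact: (subsetP sA).
  case: pickP => [e eE|h] //=; exfalso.
  have c0 : #|E| = 0 by apply: eq_card0 => x; move: (h x) => /= ->.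
  move: cE; rewrite c0; lia.
have pA : forall A : {set 'I_n}, 0 < #|A| ->
    odflt (odflt i0 [pick e in E]) [pick e in A] \in A.
  move=> A cA; case: (pickP (fun x => x \in A)) => [e eA|h] //=; exfalso.
  have c0 : #|A| = 0 by apply: eq_card0 => x; rewrite (h x).
  by move: cA; rewrite c0.
rewrite hAx.
set e0 := odflt _ _.
have e0E : e0 \in E.
  rewrite /e0; case: (p x0 < p y0); case: ifP => _; apply: pE;
  by rewrite ?subsetUl ?subsetUr ?subsetDl.
have e0L : k - t != 0 -> k.+1 != t.*2 -> e0 \in L.
  move=> h1 h2; rewrite /e0; case: (p x0 < p y0).
    by rewrite cL eqxx; apply: pA; rewrite cL; lia.
  have -> : (#|S| == k - t) = false by rewrite cS; lia.
  by rewrite ES; apply: pA; rewrite cL; lia.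
have e0nL : k - t = 0 -> e0 \notin L.
  by move=> h; rewrite inL; have := ltn_ord (p e0); lia.
have amid : all (fun z => z \notin E) mid by apply/allP=> z; apply: mE.
have HS := msort_spec (ok := fun z => z \notin E) (cmp_spec ht1 htk hkn' hk e0E)
  (rel_total p (e0 \in L)) (trunc_log 2 n).+1 umid amid.
apply: spec_bind (spec_weaken HS _ (fun _ h => h)) _.
  by rewrite leq_mul2l smid leq_subr orbT.
move=> s [ps so].
have so' : sorted (rel_of p (e0 \in L)) s.
  apply: so; rewrite smid; apply: leq_trans (leq_subr _ _) _.
  exact: ltnW (trunc_log_ltn _ _).
have hs : s = if e0 \in L then mid_sorted k t p else rev (mid_sorted k t p).
  case eL: (e0 \in L); rewrite eL in so'.
  - apply: (@sorted_eq _ (rel_of p true) (@rel_trans _ p true) (@rel_anti _ p true)) => //.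
      exact: (sort_sorted (rel_total p true)).
    by rewrite /mid_sorted perm_sym perm_sort perm_sym.
  - apply: (@sorted_eq _ (rel_of p false) (@rel_trans _ p false) (@rel_anti _ p false)) => //.
      rewrite rev_sorted; exact: (sort_sorted (rel_total p true)).
    by rewrite /mid_sorted perm_sym perm_rev perm_sort perm_sym.
apply: spec_ret; split=> //=.
case: (k.+1 =P t.*2) => [sym|nsym].
  case: (k - t != 0); case: (e0 \in L) in hs *; rewrite hs ?revK; tauto.
case: (boolP (k - t != 0)) => h.
  by rewrite hs e0L //; [left | apply/eqP].
rewrite hs (negbTE (e0nL _)); first by rewrite revK; left.
by move/negPn/eqP: h.
Qed.
End Algo.

Theorem mainTheorem1 (k t : nat) (hk : 2 <= k) (ht1 : 1 <= t) (htk : t <= k) :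
  exists (C N : nat), forall n : nat, N <= n ->
    exists T : qtree n, forall p : {perm 'I_n},
      exists (q : nat) (M : {set 'I_n}) (s : seq 'I_n),
        run k t p T = Some (q, (M, s)) /\
        q <= C * n * trunc_log 2 n /\
        M = smallS t p :|: largeL k t p /\
        (s = mid_sorted k t p \/ (k.+1 = t.*2 /\ s = rev (mid_sorted k t p))).
Proof.
exists 4, k.+2 => n hn.
have n0 : 0 < n by lia.
pose i0 : 'I_n := Ordinal n0.
exists (toq (algo k t i0)) => p.
have hkn : k < n by lia.
have [c [[M s] [He [hc [/= hM hs]]]]] := algo_spec p i0 ht1 htk hkn hk.
exists c, M, s; rewrite run_toq He; split=> //; split; last by split.
have tl : 0 < trunc_log 2 n by rewrite trunc_log_gt0 /=; lia.
move: (trunc_log 2 n) tl hc => l tl hc.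
nia.
Qed.
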